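(* Let $n\ge 1$, let $\mathbf{A}\in\mathbb{R}^{n\times n}$ be symmetric positive semidefinite, $\mathbf{b}\in\mathbb{R}^n$, and let $h(\mathbf{x})=\sum_{i=1}^n \varphi(\mathbf{x}_i)$, where $\varphi:\mathbb{R}\to\mathbb{R}\cup\{+\infty\}$ is proper, lower semicontinuous and convex. Put $f(\mathbf{x})=\tfrac12\mathbf{x}^T\mathbf{A}\mathbf{x}+\mathbf{x}^T\mathbf{b}+h(\mathbf{x})$. Write $\mathbf{A}=\mathbf{L}+\mathbf{D}+\mathbf{L}^T$, where $\mathbf{D}$ is the diagonal part and $\mathbf{L}$ the strictly lower triangular part of $\mathbf{A}$. Fix $\omega\in(0,2)$ and $\theta\in[0,\infty)$ with $\mathbf{D}_{i,i}+\theta>0$ for all $i$. Set $\mathbf{B}=\mathbf{L}+\tfrac1\omega(\mathbf{D}+\theta\mathbf{I})$ and $\mathbf{C}=\mathbf{L}^T+\tfrac1\omega((\omega-1)\mathbf{D}-\theta\mathbf{I})$, so that $\mathbf{A}=\mathbf{B}+\mathbf{C}$. For $\mathbf{x}\in\mathbb{R}^n$ let $\mathcal{T}(\mathbf{x})$ be the unique $\mathbf{z}\in\mathbb{R}^n$ with $\mathbf{0}\in\mathbf{B}\mathbf{z}+\mathbf{b}+\mathbf{C}\mathbf{x}+\partial h(\mathbf{z})$. Then for all $\mathbf{x},\mathbf{y}\in\mathbb{R}^n$: (a) there exists $\mathbf{v}\in\partial h(\mathcal{T}(\mathbf{x}))$ such that $\|\mathbf{A}\mathcal{T}(\mathbf{x})+\mathbf{b}+\mathbf{v}\|\le\|\mathbf{C}\|\,\|\mathbf{x}-\mathcal{T}(\mathbf{x})\|$;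 (b) $f(\mathcal{T}(\mathbf{y}))-f(\mathbf{x})\le\langle\mathcal{T}(\mathbf{y})-\mathbf{x},\,\mathbf{C}(\mathcal{T}(\mathbf{y})-\mathbf{y})\rangle-\tfrac12(\mathbf{x}-\mathcal{T}(\mathbf{y}))^T\mathbf{A}(\mathbf{x}-\mathcal{T}(\mathbf{y}))$.
   Context: $\partial h$ denotes the convex subdifferential. $\|\cdot\|$ is the Euclidean norm on vectors and the spectral norm (largest singular value) on matrices. Since $\mathbf{B}$ is lower triangular with positive diagonal and $h$ is separable, $\mathcal{T}(\mathbf{x})$ is well defined and can be computed by forward substitution: with $\mathbf{u}=\mathbf{b}+\mathbf{C}\mathbf{x}$, for $j=1,\dots,n$, $\mathbf{z}_j=\arg\min_t \tfrac12\mathbf{B}_{j,j}t^2+(\mathbf{u}_j+\sum_{i<j}\mathbf{B}_{j,i}\mathbf{z}_i)t+\varphi(t)$. *)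

(* Defs.v *)
From HB Require Import structures.
From mathcomp Require Import all_boot all_order all_algebra.
From mathcomp Require Import all_classical all_reals all_analysis.
Set Implicit Arguments. Unset Strict Implicit. Unset Printing Implicit Defensive.
Import Order.TTheory GRing.Theory Num.Theory.
Import numFieldNormedType.Exports.
Local Open Scope ring_scope.
Local Open Scope classical_set_scope.

Section Defs.
Context {R : realType} {n : nat}.

Definition dotv (u v : 'cV[R]_n) : R := (u^T *m v) 0 0.
Definition enorm (u : 'cV[R]_n) : R := Num.sqrt (\sum_(i < n) (u i 0) ^+ 2).
Definition quadf (M : 'M[R]_n) (x : 'cV[R]_n) : R := (x^T *m M *m x) 0 0.

Definition spec_norm (C : 'M[R]_n) : R :=
  Num.sqrt (sup [set l : R | eigenvalue (C^T *m C) l]).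

Definition sym_psd (A : 'M[R]_n) : Prop :=
  A^T = A /\ forall x : 'cV[R]_n, 0 <= quadf A x.

Definition diag_part (A : 'M[R]_n) : 'M[R]_n :=
  \matrix_(i, j) (if i == j then A i j else 0).
Definition slower_part (A : 'M[R]_n) : 'M[R]_n :=
  \matrix_(i, j) (if (j < i)%N then A i j else 0).

Definition Bmat (A : 'M[R]_n) (om th : R) : 'M[R]_n :=
  slower_part A + om^-1 *: (diag_part A + th%:M).
Definition Cmat (A : 'M[R]_n) (om th : R) : 'M[R]_n :=
  (slower_part A)^T + om^-1 *: ((om - 1) *: diag_part A - th%:M).

Definition sep_h (phi : R -> \bar R) (x : 'cV[R]_n) : \bar R :=
  (\sum_(i < n) phi (x i ord0))%E.

Definition subdiff (h : 'cV[R]_n -> \bar R) (z v : 'cV[R]_n) : Prop :=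
  (h z < +oo)%E /\ forall y, (h z + (dotv v (y - z))%:E <= h y)%E.

Definition fobj (A : 'M[R]_n) (b : 'cV[R]_n) (phi : R -> \bar R)
    (x : 'cV[R]_n) : \bar R :=
  ((2^-1 * quadf A x + dotv x b)%:E + sep_h phi x)%E.

Definition is_T (A : 'M[R]_n) (b : 'cV[R]_n) (phi : R -> \bar R) (om th : R)
    (x z : 'cV[R]_n) : Prop :=
  exists v, subdiff (sep_h phi) z v /\
    Bmat A om th *m z + b + Cmat A om th *m x + v = 0.

End Defs.

Definition proper_ext {R : realType} (phi : R -> \bar R) : Prop :=
  (exists t, (phi t < +oo)%E) /\ (forall t, (-oo < phi t)%E).

Definition convex_ext {R : realType} (phi : R -> \bar R) : Prop :=
  forall (a c t : R), (0 < t < 1)%R ->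
    (phi (t * a + (1 - t) * c)%R <= t%:E * phi a + (1 - t)%:E * phi c)%E.

(* Main.v *)
Require Import Defs.
From HB Require Import structures.
From mathcomp Require Import all_boot all_order all_algebra.
From mathcomp Require Import all_classical all_reals all_analysis.
From mathcomp Require Import ring lra.
Import Order.TTheory GRing.Theory Num.Theory.
Import numFieldNormedType.Exports.
Local Open Scope classical_set_scope.
Local Open Scope ring_scope.

Section Aux.
Context {R : realType} {n : nat}.
Implicit Types (u w t : 'cV[R]_n) (M P : 'M[R]_n).

Lemma dotvE u w : dotv u w = \sum_i u i 0 * w i 0.
Proof. by rewrite /dotv !mxE; apply: eq_bigr => i _; rewrite !mxE. Qed.

Lemma dotvC u w : dotv u w = dotv w u.
Proof. by rewrite !dotvE; apply: eq_bigr => i _; rewrite mulrC. Qed.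

Lemma dotvDl u w t : dotv (u + w) t = dotv u t + dotv w t.
Proof. rewrite !dotvE -big_split; apply: eq_bigr => i _; rewrite !mxE /=; ring. Qed.

Lemma dotvDr u w t : dotv t (u + w) = dotv t u + dotv t w.
Proof. by rewrite dotvC dotvDl !(dotvC t). Qed.

Lemma dotvNl u w : dotv (- u) w = - dotv u w.
Proof. rewrite !dotvE -sumrN; apply: eq_bigr => i _; rewrite !mxE /=; ring. Qed.

Lemma dotvNr u w : dotv w (- u) = - dotv w u.
Proof. by rewrite dotvC dotvNl dotvC. Qed.

Lemma dotvBl u w t : dotv (u - w) t = dotv u t - dotv w t.
Proof. by rewrite dotvDl dotvNl. Qed.

Lemma dotvBr u w t : dotv t (u - w) = dotv t u - dotv t w.
Proof. by rewrite dotvDr dotvNr. Qed.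

Lemma dotv0l u : dotv 0 u = 0.
Proof. by rewrite dotvE big1 // => i _; rewrite mxE mul0r. Qed.

Lemma dotv_mul u M w : dotv u (M *m w) = dotv (M^T *m u) w.
Proof. by rewrite /dotv trmx_mul trmxK mulmxA. Qed.

Lemma quadfE M x : quadf M x = dotv x (M *m x).
Proof. by rewrite /quadf /dotv mulmxA. Qed.

Lemma dotv_ge0 u : 0 <= dotv u u.
Proof. by rewrite dotvE sumr_ge0 // => i _; rewrite -expr2 sqr_ge0. Qed.

Lemma dotv_gt0 u : u != 0 -> 0 < dotv u u.
Proof.
move=> u0; rewrite lt_def dotv_ge0 andbT; apply: contraNN u0 => /eqP.
rewrite dotvE => /psumr_eq0P H; apply/eqP/matrixP => i j.
rewrite (ord1 j) mxE; apply/eqP; rewrite -sqrf_eq0 expr2 H // => k _.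
by rewrite -expr2 sqr_ge0.
Qed.

Lemma enormE u : enorm u = Num.sqrt (dotv u u).
Proof. by rewrite /enorm dotvE; congr Num.sqrt; apply: eq_bigr => i _; rewrite expr2. Qed.

Definition Kabs P : R := \sum_i \sum_j `|P i j|.

Lemma Kabs_ge0 P : 0 <= Kabs P.
Proof. by rewrite sumr_ge0 // => i _; rewrite sumr_ge0. Qed.

Lemma sq_le_dot u i : u i 0 ^+ 2 <= dotv u u.
Proof.
rewrite dotvE (bigD1 i) //= -expr2 lerDl sumr_ge0 // => k _.
by rewrite -expr2 sqr_ge0.
Qed.

Lemma bnd P u : dotv u (P *m u) <= Kabs P * dotv u u.
Proof.
rewrite dotvE /Kabs mulr_suml; apply: ler_sum => i _.
rewrite mxE mulr_sumr mulr_suml; apply: ler_sum => j _.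
have hi := sq_le_dot u i; have hj := sq_le_dot u j.
have h1 : `|u i 0| * `|u j 0| <= dotv u u.
  have := sqr_ge0 (`|u i 0| - `|u j 0|).
  rewrite -(real_normK (num_real (u i 0))) in hi.
  rewrite -(real_normK (num_real (u j 0))) in hj.
  nra.
have h2 : u i 0 * (P i j * u j 0) <= `|P i j| * (`|u i 0| * `|u j 0|).
  apply: le_trans (ler_norm _) _; rewrite !normrM; by rewrite mulrCA.
apply: le_trans h2 _; apply: ler_wpM2l => //.
Qed.


Lemma dotvZl a u w : dotv (a *: u) w = a * dotv u w.
Proof. rewrite !dotvE mulr_sumr; apply: eq_bigr => i _; rewrite !mxE; ring. Qed.

Lemma dotvZr a u w : dotv w (a *: u) = a * dotv w u.
Proof. by rewrite dotvC dotvZl dotvC. Qed.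

Lemma spec_bound M : (0 < n)%N -> M^T = M -> (forall u, 0 <= dotv u (M *m u)) ->
  0 <= sup [set l : R | eigenvalue M l] /\
  forall u, dotv u (M *m u) <= sup [set l : R | eigenvalue M l] * dotv u u.
Proof.
move=> hn MT Mpsd.
pose S := [set r : R | exists2 u : 'cV[R]_n, u != 0 & r = dotv u (M *m u) / dotv u u].
pose i0 : 'I_n := Ordinal hn.
pose e : 'cV[R]_n := const_mx 1.
have e0 : e != 0.
  apply/eqP => /matrixP /(_ i0 0); rewrite !mxE => /eqP; by rewrite oner_eq0.
have hS : has_sup S.
  split; first by exists (dotv e (M *m e) / dotv e e), e.
  exists (Kabs M) => r [u u0 ->]; rewrite ler_pdivrMr ?dotv_gt0 //; exact: bnd.
set mu := sup S.
have R1 : forall u, dotv u (M *m u) <= mu * dotv u u.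
  move=> u; have [->|u0] := eqVneq u 0; first by rewrite !dotv0l mulr0.
  rewrite -ler_pdivrMr ?dotv_gt0 //; apply: sup_upper_bound => //; by exists u.
have mu0 : 0 <= mu.
  apply: le_trans (sup_upper_bound hS _); last by exists e.
  by rewrite divr_ge0 // dotv_ge0.
have Eig : eigenvalue M mu.
  rewrite /eigenvalue /eigenspace kermx_eq0 row_free_unit; apply/negP => Nu.
  set N := M - mu%:M in Nu.
  have NT : N^T = N by rewrite /N linearB /= MT tr_scalar_mx.
  have Nw : forall w, dotv w (N *m w) = dotv w (M *m w) - mu * dotv w w.
    by move=> w; rewrite /N mulmxBl mul_scalar_mx dotvBr dotvZr.
  pose P := invmx N; pose K := Kabs (- P) + 1; pose t := K^-1.
  have K0 : 0 < K by rewrite /K ltr_wpDl ?Kabs_ge0.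
  have t0 : 0 < t by rewrite invr_gt0.
  have tK : t * K = 1 by rewrite mulVf // gt_eqF.
  have claim : forall u, u != 0 -> dotv u (M *m u) / dotv u u <= mu - t.
    move=> u u0; have S0 := dotv_gt0 u u0.
    rewrite ler_pdivrMr //.
    pose v := P *m u.
    have Nv : N *m v = u by rewrite /v /P mulKVmx.
    have e1 : dotv v (N *m u) = dotv u u by rewrite dotv_mul NT Nv.
    have hc : - (K * dotv u u) <= dotv v u.
      have := bnd (- P) u; rewrite mulNmx dotvNr dotvC.
      have := Kabs_ge0 (- P); rewrite /K; nra.
    have hle : dotv (u + t *: v) (N *m (u + t *: v)) <= 0.
      by rewrite Nw subr_le0 R1.
    move: hle; rewrite mulmxDr -scalemxAr Nv !dotvDl !dotvDr !dotvZl !dotvZr e1 Nw => hle.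
    have ht2 : 0 <= t * t * (dotv v u + K * dotv u u).
      by apply: mulr_ge0; [apply: mulr_ge0; exact: ltW | lra].
    have ttK : t * t * K = t by rewrite -mulrA tK mulr1.
    have ht3 : - (t * dotv u u) <= t * (t * dotv v u).
      have h4 : t * t * (K * dotv u u) = t * dotv u u by rewrite mulrA ttK.
      move: ht2; rewrite mulrDr h4; lra.
    lra.
  have : mu <= mu - t.
    apply: ge_sup; first by exists (dotv e (M *m e) / dotv e e), e.
    by move=> r [u u0 ->]; exact: claim.
  lra.
have hE : has_sup [set l : R | eigenvalue M l].
  split; first by exists mu.
  exists mu => l /eigenvalueP [v vM v0].
  have u0 : v^T != 0 by rewrite trmx_eq0.
  have Mu : M *m v^T = l *: v^T by rewrite -{1}MT -trmx_mul vM linearZ.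
  have := R1 v^T; rewrite Mu dotvZr.
  by rewrite ler_pM2r ?dotv_gt0.
have mule : mu <= sup [set l : R | eigenvalue M l] by apply: sup_upper_bound.
split; first exact: le_trans mule.
move=> u; apply: le_trans (R1 u) _; apply: ler_wpM2r => //; exact: dotv_ge0.
Qed.


End Aux.

Lemma BC_eq (R : realType) (n : nat) (A : 'M[R]_n) om th :
  A^T = A -> om != 0 -> Bmat A om th + Cmat A om th = A.
Proof.
move=> AT om0.
have Asym k l : A k l = A l k by rewrite -{1}AT mxE.
apply/matrixP => i j; rewrite !mxE.
have [h|h|h] := ltngtP i j.
- have -> : (i == j) = false by apply/negbTE; apply/eqP => e; rewrite e ltnn in h.
  rewrite ?h /= ?mulr0n Asym; ring.
- have -> : (i == j) = false by apply/negbTE; apply/eqP => e; rewrite e ltnn in h.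
  rewrite ?h /= ?mulr0n; ring.
- have e : i = j by apply: val_inj.
  rewrite e eqxx ?ltnn /= ?mulr1n; field; exact: om0.
Qed.

Theorem lemma1 (R : realType) (n : nat) (A : 'M[R]_n) (b : 'cV[R]_n)
  (phi : R -> \bar R) (om th : R) :
  (1 <= n)%N ->
  sym_psd A ->
  proper_ext phi -> lower_semicontinuous phi -> convex_ext phi ->
  0 < om < 2 -> 0 <= th -> (forall i, 0 < A i i + th) ->
  (* (a) *)
  (forall x z : 'cV[R]_n, is_T A b phi om th x z ->
     exists v, subdiff (sep_h phi) z v /\
       enorm (A *m z + b + v) <= spec_norm (Cmat A om th) * enorm (x - z)) /\
  (* (b) *)
  (forall x y z : 'cV[R]_n, is_T A b phi om th y z ->
     (fobj A b phi z - fobj A b phi x <=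
       (dotv (z - x) (Cmat A om th *m (z - y))
        - 2^-1 * quadf A (x - z))%:E)%E).
Proof.
move=> hn [AT Apsd] _ _ _ /andP[om0 _] _ _.
have BC := @BC_eq R n A om th AT (lt0r_neq0 om0).
set B := Bmat A om th in BC *; set C := Cmat A om th in BC *.
have eB : B = A - C by rewrite -BC addrK.
split.
- move=> x z [v [sv eq]]; exists v; split => //.
  have ev : v = - (B *m z + b + C *m x).
    by apply/eqP; rewrite -addr_eq0 addrC eq.
  have e2 : A *m z + b + v = C *m (z - x).
    rewrite ev -{1}BC mulmxDl mulmxBr; move: (B *m z) (C *m z) (C *m x) => p q r.
    apply/matrixP => i j; rewrite !mxE /=; ring.
  rewrite e2 !enormE.
  have CT : (C^T *m C)^T = C^T *m C by rewrite trmx_mul trmxK.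
  have Cpsd : forall u, 0 <= dotv u ((C^T *m C) *m u).
    by move=> u; rewrite -mulmxA dotv_mul trmxK dotv_ge0.
  have [s0 sb] := spec_bound (C^T *m C) hn CT Cpsd.
  rewrite /spec_norm -sqrtrM //.
  have -> : dotv (x - z) (x - z) = dotv (z - x) (z - x).
    by rewrite -opprB dotvNl dotvNr opprK.
  apply: ler_wsqrtr; apply: le_trans (sb (z - x)).
  by rewrite -mulmxA [X in _ <= X]dotv_mul trmxK.
- move=> x y z [v [[hzf hsub] eq]].
  have ev : v = - (B *m z + b + C *m y).
    by apply/eqP; rewrite -addr_eq0 addrC eq.
  clearbody B C.
  have hs := hsub x.
  have sA : dotv z (A *m x) = dotv x (A *m z) by rewrite dotv_mul AT dotvC.
  have key : forall rz rx, rz + dotv v (x - z) <= rx ->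
     (2^-1 * quadf A z + dotv z b) + rz - ((2^-1 * quadf A x + dotv x b) + rx)
     <= dotv (z - x) (C *m (z - y)) - 2^-1 * quadf A (x - z).
    move=> rz rx; rewrite dotvC ev eB !quadfE !mulmxBr !mulmxBl ?mulmxDl.
    rewrite !dotvNr !dotvDr ?dotvBr ?dotvBl ?dotvBr ?dotvNl ?dotvNr ?sA ?(dotvC b x) ?(dotvC b z).
    lra.
  move: hs hzf; rewrite /fobj.
  case: (sep_h phi z) => [rz| |] //; case: (sep_h phi x) => [rx| |] //=.
  + by rewrite !lee_fin => hs _; exact: key.
  all: by move=> _ _; rewrite ?addeNy ?addNye leNye.
Qed.
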